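(* Assume the standing hypotheses described in the context. Take $t,\varepsilon,\theta\ge0$ and $x\in C$ such that \[\|x-x_0\|\le t<\bar t,\qquad \|F'(x_0)^{-1}F(x)\|\le f(t)+\varepsilon,\qquad t-(1+\theta)\frac{f(t)+\varepsilon}{f'(t)}<R.\] If $y\in\mathbb X$ and $\|F'(x_0)^{-1}[F(x)+F'(x)(y-x)]\|\le\theta\|F'(x_0)^{-1}F(x)\|$, then (1) $\|y-x\|\le-(1+\theta)\frac{f(t)+\varepsilon}{f'(t)}$; (2) $\|y-x_0\|\le t-(1+\theta)\frac{f(t)+\varepsilon}{f'(t)}<R$; (3) $\|F'(x_0)^{-1}F(y)\|\le f\Big(t-(1+\theta)\frac{f(t)+\varepsilon}{f'(t)}\Big)+\varepsilon+2\theta(f(t)+\varepsilon)$.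
   Context: Standing hypotheses: $\mathbb X,\mathbb Y$ are Banach spaces; $B(x,r)$ is the open ball. $R\in\mathbb R$, $C\subseteq\mathbb X$, $F:C\to\mathbb Y$ is continuous and continuously differentiable on $\mathrm{int}(C)$, $x_0\in\mathrm{int}(C)$ with $F'(x_0)$ non-singular, $f:[0,R)\to\mathbb R$ is continuously differentiable, $B(x_0,R)\subseteq C$, $\|F'(x_0)^{-1}[F'(y)-F'(x)]\|\le f'(\|y-x\|+\|x-x_0\|)-f'(\|x-x_0\|)$ for all $x,y\in B(x_0,R)$ with $\|x-x_0\|+\|y-x\|<R$, $\|F'(x_0)^{-1}F(x_0)\|\le f(0)$, and (h1) $f(0)>0$, $f'(0)=-1$; (h2) $f'$ is strictly increasing and convex; (h3) $f(t)<0$ for some $t\in(0,R)$. Notation: $\bar t:=\sup\{t\in[0,R):f'(t)<0\}$. *)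

(* Defs.v *)
From HB Require Import structures.
From mathcomp Require Import all_boot all_order all_algebra.
From mathcomp Require Import all_classical all_reals all_analysis.
Set Implicit Arguments. Unset Strict Implicit. Unset Printing Implicit Defensive.
Import Order.TTheory GRing.Theory Num.Theory.
Import numFieldNormedType.Exports.
Local Open Scope classical_set_scope.
Local Open Scope ring_scope.

Definition tbar (K : realType) (df : K -> K) (R : K) : K :=
  sup [set t | 0 <= t /\ t < R /\ df t < 0].

Definition has_deriv_on_0R (K : realType) (f df : K -> K) (R : K) : Prop :=
  forall t, 0 <= t -> t < R ->
    (fun h : K => h^-1 * (f (t + h) - f t))
      @ within [set h | 0 <= t + h /\ t + h < R] (0 : K)^' --> df t.

(* Main.v *)
Require Import Defs.
From HB Require Import structures.
From mathcomp Require Import all_boot all_order all_algebra.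
From mathcomp Require Import all_classical all_reals all_analysis.
From mathcomp Require Import ring lra.
Import Order.TTheory GRing.Theory Num.Theory.
Import numFieldNormedType.Exports.
Local Open Scope classical_set_scope.
Local Open Scope ring_scope.

Lemma fder_eps (K : realType) (f df : K -> K) (R : K) : has_deriv_on_0R f df R ->
  forall p, 0 <= p -> p < R -> forall e, 0 < e -> exists2 d, 0 < d &
   forall k, `|k| < d -> 0 <= p + k -> p + k < R ->
     `|f (p + k) - f p - k * df p| <= e * `|k|.
Proof.
move=> Hd p p0 pR e e0.
have /cvgrPdist_lt /(_ e e0) := Hd p p0 pR.
move=> /nbhs_normP [d d0 Hd']; exists d => // k kd pk0 pkR.
have [->|k0] := eqVneq k 0; first by rewrite addr0 mul0r subrr subr0 normr0 mulr0.
have : ball_ Num.Def.normr 0 d k by rewrite /ball_ /= sub0r normrN.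
move=> /Hd' /(_ k0) /(_ (conj pk0 pkR)) H.
have -> : f (p + k) - f p - k * df p = - (k * (df p - k^-1 * (f (p + k) - f p))).
  by rewrite mulrBr mulrA mulfV // mul1r opprB addrC.
by rewrite normrN normrM mulrC ler_wpM2r // ltW.
Qed.

Lemma diff_eps (K : realType) (X Y : normedModType K) (F : X -> Y) (z : X) :
  differentiable F z -> forall e : K, 0 < e -> exists2 d : K, 0 < d &
   forall k, `|k| < d -> `|F (z + k) - F z - 'd F z k| <= e * `|k|.
Proof.
move=> /diff_locally /eqaddoP H e e0.
have := H e e0 => /nbhs_normP [d d0 Hd]; exists d => // k kd.
have : ball_ Num.Def.normr 0 d k by rewrite /ball_ /= sub0r normrN.
move=> /Hd /=. rewrite /shift. by rewrite (addrC z k); move=> h; move: h => /=; rewrite opprD addrA.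
Qed.

Lemma creep (K : realType) (phi : K -> K) :
  phi 0 <= 0 ->
  (forall tau, 0 <= tau -> tau < 1 -> forall e, 0 < e -> exists2 d, 0 < d &
     forall h, 0 < h -> h < d -> tau + h <= 1 -> phi (tau + h) <= phi tau + e * h) ->
  (forall tau, 0 < tau -> tau <= 1 -> forall e, 0 < e -> exists2 d, 0 < d &
     forall h, 0 < h -> h < d -> h <= tau -> phi tau <= phi (tau - h) + e) ->
  phi 1 <= 0.
Proof.
move=> H0 Hr Hl.
apply/ler_addgt0Pr => eta eta0; rewrite add0r.
pose S := [set tau | 0 <= tau /\ tau <= 1 /\
   forall s, 0 <= s -> s <= tau -> phi s <= eta * s].
have S0 : S 0.
  split; first by []. split; first by [].
  move=> s s0 s00; have -> : s = 0 by apply/le_anti; rewrite s0 s00.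
  by rewrite mulr0.
have hS : has_sup S.
  split; first by exists 0.
  by exists 1 => x [_ []].
set m := sup S.
have m0 : 0 <= m := sup_upper_bound hS S0.
have m1 : m <= 1 by apply: ge_sup; [exists 0 | move=> x [_ []]].
have below : forall s, 0 <= s -> s < m -> phi s <= eta * s.
  move=> s s0 sm.
  have sm' : 0 < m - s by rewrite subr_gt0.
  have [e Se] := sup_adherent sm' hS.
  rewrite -/m opprB addrC subrK => se.
  by case: Se => _ [_]; apply => //; exact: ltW.
have atm : phi m <= eta * m.
  have [m00|mpos] := eqVneq m 0; first by rewrite m00 mulr0.
  have mpos' : 0 < m by rewrite lt_neqAle eq_sym mpos m0.
  apply/ler_addgt0Pr => e e0.
  have [d d0 Hd] := Hl m mpos' m1 e e0.
  pose h := Num.min (d / 2) m.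
  have hpos : 0 < h by rewrite lt_min divr_gt0.
  have hd : h < d by rewrite gt_min; apply/orP; left; lra.
  have hm : h <= m by rewrite ge_min lexx orbT.
  have := Hd h hpos hd hm.
  have : phi (m - h) <= eta * (m - h) by apply: below; lra.
  nra.
have Sm : S m.
  split; first by []. split; first by [].
  move=> s s0; rewrite le_eqVlt => /orP [/eqP ->|]; first by [].
  exact: below.
have nm1 : ~ (m < 1).
  move=> m1'.
  have [d d0 Hd] := Hr m m0 m1' eta eta0.
  pose h := Num.min (d / 2) (1 - m).
  have hpos : 0 < h by rewrite lt_min divr_gt0 // subr_gt0.
  have hd : h < d by rewrite gt_min; apply/orP; left; lra.
  have hm : h <= 1 - m by rewrite ge_min lexx orbT.
  have : S (m + h).
    split; first lra. split; first lra.
    move=> s s0 sh.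
    have [sm|ms] := leP s m; first by case: Sm => _ [_]; apply.
    have := Hd (s - m); rewrite (addrC m (s - m)) subrK; move=> /(_ _ _ _).
    move=> /(_ ltac:(lra) ltac:(lra) ltac:(lra)).
    nra.
  move=> /(sup_upper_bound hS); rewrite -/m; lra.
have m1e : m = 1 by apply/le_anti; rewrite m1 /= leNgt; apply/negP.
case: Sm => _ [_ HS]; have := HS 1 ler01; rewrite m1e mulr1; apply; exact: lexx.
Qed.

Lemma slope (K : realType) (df : K -> K) (R : K)
  (h2cvx : forall s u l, 0 <= s -> s < R -> 0 <= u -> u < R -> 0 <= l -> l <= 1 ->
      df (l * s + (1 - l) * u) <= l * df s + (1 - l) * df u) :
  forall a b h, 0 <= a -> a <= b -> 0 <= h -> b + h < R ->
  df (a + h) - df a <= df (b + h) - df b.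
Proof.
move=> a b h a0 ab h0 bhR.
have [D0|Dn0] := eqVneq (b + h - a) 0.
  have eb : b = a by lra.
  have eh : h = 0 by lra.
  by rewrite eb eh addr0.
have Dpos : 0 < b + h - a by rewrite lt_neqAle eq_sym Dn0 /=; lra.
pose l := (b - a) / (b + h - a).
have l0 : 0 <= l by rewrite /l divr_ge0 //; lra.
have l1 : l <= 1 by rewrite /l ler_pdivrMr //; lra.
have e1 : l * a + (1 - l) * (b + h) = a + h.
  by rewrite /l; field.
have e2 : (1 - l) * a + (1 - (1 - l)) * (b + h) = b.
  by rewrite /l; field.
have c1 := h2cvx a (b + h) l a0 ltac:(lra) ltac:(lra) bhR l0 l1.
have c2 := h2cvx a (b + h) (1 - l) a0 ltac:(lra) ltac:(lra) bhR ltac:(lra) ltac:(lra).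
rewrite e1 in c1; rewrite e2 in c2.
lra.
Qed.

Lemma bounded_inverse (K : realType) (X Y : completeNormedModType K)
  (L : {linear X -> Y}) (M : Y -> X) :
  continuous L -> (forall v, M (L v) = v) -> (forall w, L (M w) = w) ->
  exists2 c : K, 0 < c & forall w, `|M w| <= c * `|w|.
Proof.
move=> Lc HML HLM.
have MB : forall a b, M (a - b) = M a - M b.
  by move=> a b; have := HML (M a - M b); rewrite linearB !HLM.
pose A (n : nat) := closure [set w : Y | `|M w| <= n%:R].
have [n [w0 [r r0 Hb]]] : exists n, exists w0 : Y, exists2 r : K, 0 < r &
    ball w0 r `<=` A n.
  apply: contrapT => Hn.
  have Od : forall i, open (~` A i) /\ dense (~` A i).
    move=> i; split; first exact/closed_openC/closed_closure.
    move=> OO [p0 Oo] oO; apply: contrapT => Hc; apply: Hn; exists i, p0.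
    have /nbhs_ballP [e e0 He] := open_nbhs_nbhs (conj oO Oo).
    exists e => // y oy; apply: contrapT => nA; apply: Hc; exists y.
    by split => //; exact: He.
  have := Baire Od; move=> /(_ setT) [].
  - by exists 0.
  - exact: openT.
  move=> w [_ /(_ (Num.truncn `|M w|).+1 I)]; apply; apply: subset_closure.
  rewrite /=; apply/ltW; exact: truncnS_gt.
have clos : forall w, A n w -> forall e, 0 < e ->
    exists a, `|M a| <= n%:R /\ `|w - a| < e.
  move=> w Aw e e0; have [a [Ma ba]] := Aw _ (nbhsx_ballx w e e0).
  by exists a; split => //; move: ba; rewrite -ball_normE.
pose N : K := n%:R + n%:R.
have HP : forall u, `|u| < r -> forall e, 0 < e ->
    exists v, `|v| <= N /\ `|u - L v| < e.
  move=> u ur e e0.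
  have A1 : A n (w0 + u).
    by apply: Hb; rewrite -ball_normE /ball_ /= opprD addrA subrr sub0r normrN.
  have A2 : A n w0 by apply: Hb; exact: ballxx.
  have e2 : 0 < e / 2 by rewrite divr_gt0.
  have [a [Ma ha]] := clos _ A1 _ e2.
  have [b [Mb hb]] := clos _ A2 _ e2.
  exists (M a - M b); split.
    by apply: (le_trans (ler_normB _ _)); rewrite /N lerD.
  rewrite linearB !HLM.
  have -> : u - (a - b) = (w0 + u - a) - (w0 - b).
    by rewrite !opprB !addrA [RHS]addrC !addrA addNr add0r addrAC.
  apply: (le_lt_trans (ler_normB _ _)).
  have -> : e = e / 2 + e / 2 by rewrite -splitr.
  exact: ltrD.
pose c0 : K := 2 * (N + 1) / r.
have N0 : 0 <= N by rewrite /N addr_ge0.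
have c0pos : 0 < c0 by rewrite /c0 divr_gt0 // mulr_gt0 //; lra.
have HQ : forall u, exists v, `|v| <= c0 * `|u| /\ `|u - L v| <= `|u| / 2.
  move=> u; have [->|u0] := eqVneq u 0.
    by exists 0; rewrite linear0 subr0 !normr0 mulr0 mul0r; split.
  have nu : 0 < `|u| by rewrite normr_gt0.
  pose lam := r / (2 * `|u|).
  have lam0 : 0 < lam by rewrite /lam divr_gt0 // mulr_gt0.
  have ilam : lam^-1 = 2 * `|u| / r by rewrite /lam invf_div.
  have r4 : 0 < r / 4 by rewrite divr_gt0.
  have lu : `|lam *: u| < r.
    rewrite normrZ gtr0_norm // /lam.
    have -> : r / (2 * `|u|) * `|u| = r / 2 by field; rewrite gt_eqF.
    lra.
  have [v' [hv' hu']] := HP (lam *: u) lu _ r4.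
  exists (lam^-1 *: v'); split.
    rewrite normrZ gtr0_norm ?invr_gt0 // ilam /c0.
    have : 0 <= `|u| * r^-1 by rewrite mulr_ge0 // invr_ge0 ltW.
    move=> Hur; nra.
  have -> : u - L (lam^-1 *: v') = lam^-1 *: (lam *: u - L v').
    by rewrite linearZ scalerBr scalerA mulVf ?gt_eqF // scale1r.
  rewrite normrZ gtr0_norm ?invr_gt0 //.
  apply: (le_trans (ler_wpM2l _ (ltW hu'))); first by rewrite invr_ge0 ltW.
  rewrite ilam; rewrite le_eqVlt; apply/orP; left; apply/eqP; field; rewrite gt_eqF //.
have [G HG] := choice HQ.
exists (2 * c0) => [|w]; first by rewrite mulr_gt0.
pose step := fun u : Y => u - L (G u).
pose useq := fun k => iter k step w.
pose vseq := fun k => G (useq k).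
have Hu : forall k, `|useq k| <= `|w| * (2^-1) ^+ k.
  elim => [|k IH]; first by rewrite expr0 mulr1.
  rewrite /useq iterS -/(useq k) exprS.
  have [_ h] := HG (useq k).
  apply: (le_trans h); lra.
have Hv : forall k, `|vseq k| <= c0 * (`|w| * (2^-1) ^+ k).
  move=> k; have [h _] := HG (useq k).
  by apply: (le_trans h); rewrite ler_wpM2l // ltW.
have geo : forall j, \sum_(0 <= k < j) (2^-1 : K) ^+ k = 2 - 2 * (2^-1) ^+ j.
  elim => [|j IH]; first by rewrite big_geq // expr0; lra.
  by rewrite big_nat_recr //= IH exprS; lra.
have Hsum : forall j, \sum_(0 <= k < j) `|vseq k| <= 2 * c0 * `|w|.
  move=> j; apply: (le_trans (ler_sum _ (fun k _ => Hv k))).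
  rewrite -mulr_sumr -mulr_sumr geo.
  have : 0 <= c0 * `|w| * (2^-1) ^+ j.
    apply: mulr_ge0; [apply: mulr_ge0; [exact: ltW|exact: normr_ge0] | apply: exprn_ge0; lra].
  nra.
have cvn : cvgn [normed series vseq].
  apply: nondecreasing_is_cvgn.
    apply/nondecreasing_seqP => k; rewrite /= seriesSr lerDl; exact: normr_ge0.
  exists (2 * c0 * `|w|) => _ [k _ <-]; exact: Hsum.
have cv := normed_cvg cvn.
set s := limn (series vseq).
have ns : `|s| <= 2 * c0 * `|w|.
  apply: (le_trans (lim_series_norm cvn)); apply: limr_le => //.
  by apply: nearW => k; exact: Hsum.
have Lser : forall k, L (series vseq k) = w - useq k.
  elim => [|k IH]; first by rewrite /series /= big_geq // linear0 subrr.
  rewrite seriesSr linearD IH /useq iterS -/(useq k) /step /vseq.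
  by rewrite opprB addrA addrAC.
have Ls : L s = w.
  have c1 : (L \o series vseq) @ \oo --> L s.
    by apply: continuous_cvg; [exact: Lc | exact: cv].
  have c2 : (L \o series vseq) @ \oo --> w.
    have -> : L \o series vseq = fun k => w - useq k by apply/funext => k; exact: Lser.
    rewrite -[X in _ --> X]subr0; apply: cvgB; first exact: cvg_cst.
    apply: norm_cvg0.
    apply: (@squeeze_cvgr _ _ _ _ (fun _ => 0) (fun k => `|w| * (2^-1) ^+ k)).
    - by apply: nearW => k; rewrite normr_ge0 Hu.
    - exact: cvg_cst.
    - apply: cvg_geometric; rewrite gtr0_norm //; lra.
  exact: (cvg_unique _ c1 c2).
have -> : M w = s by rewrite -{1}Ls HML.
exact: ns.
Qed.

Lemma L1 (V : zmodType) (a b c s t : V) :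
  (a - c - s) - (b - c - t) = a - b - (s - t).
Proof.
rewrite (addrAC a) (addrAC b) [(b - t) - c]addrC addrKA.
by rewrite !opprB [t - b]addrC addrACA [- s + t]addrC.
Qed.


Lemma right_cond (K : realType) (X Y : normedModType K) (F : X -> Y) (M : Y -> X)
  (f df : K -> K) (R t S cM : K) (x d : X) (P : Y)
  (MD : forall a b, M (a + b) = M a + M b)
  (MZ : forall (k : K) a, M (k *: a) = k *: M a)
  (cM0 : 0 < cM) (HM : forall w, `|M w| <= cM * `|w|)
  (Hfder : has_deriv_on_0R f df R) (S0 : 0 <= S) (Ht0 : 0 <= t) (HtR : t + S < R)
  (Dz : forall tau, 0 <= tau -> tau <= 1 -> differentiable F (x + tau *: d))
  (Hmz : forall tau, 0 <= tau -> tau <= 1 ->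
     `|M ('d F (x + tau *: d) d - P)| <= (df (t + tau * S) - df t) * S) :
  forall tau, 0 <= tau -> tau < 1 -> forall e, 0 < e -> exists2 dl, 0 < dl &
   forall h, 0 < h -> h < dl -> tau + h <= 1 ->
    `|M (F (x + (tau + h) *: d) - F x - (tau + h) *: P)|
       - (f (t + (tau + h) * S) - f t - (tau + h) * (df t * S))
    <= `|M (F (x + tau *: d) - F x - tau *: P)|
       - (f (t + tau * S) - f t - tau * (df t * S)) + e * h.
Proof.
move=> tau tau0 tau1 e e0.
have tau1' : tau <= 1 := ltW tau1.
set s := `|d|.
have s0 : 0 <= s := normr_ge0 _.
have tS1 : tau * S <= S by rewrite -[leRHS]mul1r ler_wpM2r.
set p := t + tau * S.
have p0 : 0 <= p by rewrite /p addr_ge0 // mulr_ge0.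
have pR : p < R by rewrite /p; lra.
set z := x + tau *: d.
have Dzt := Dz tau tau0 tau1'.
pose e1 := e / (2 * cM * (s + 1)).
have e1pos : 0 < e1 by rewrite /e1 divr_gt0 // !mulr_gt0 // ltr_wpDl.
have [d1 d1pos Hd1] := @diff_eps _ _ _ F z Dzt e1 e1pos.
pose e2 := e / (2 * (S + 1)).
have e2pos : 0 < e2 by rewrite /e2 divr_gt0 // !mulr_gt0 // ltr_wpDl.
have [d2 d2pos Hd2] := @fder_eps _ f df R Hfder p p0 pR e2 e2pos.
exists (Num.min (d1 / (s + 1)) (d2 / (S + 1))).
  by rewrite lt_min !divr_gt0 // ltr_wpDl.
move=> h h0; rewrite lt_min => /andP [hd1' hd2'] htau.
have hd1 : h * s < d1.
  move: hd1'; rewrite ltr_pdivlMr ?ltr_wpDl // => hh; apply: (le_lt_trans _ hh).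
  by apply: ler_wpM2l; [exact: ltW | rewrite lerDl].
have hd2 : h * S < d2.
  move: hd2'; rewrite ltr_pdivlMr ?ltr_wpDl // => hh; apply: (le_lt_trans _ hh).
  by apply: ler_wpM2l; [exact: ltW | rewrite lerDl].
have zh : x + (tau + h) *: d = z + h *: d by rewrite /z scalerDl addrA.
set g1 := F (x + (tau + h) *: d) - F x - (tau + h) *: P.
set g0 := F z - F x - tau *: P.
have dg : g1 - g0 = (F (z + h *: d) - F z - 'd F z (h *: d)) + h *: ('d F z d - P).
  rewrite /g1 /g0 zh L1 scalerDl [tau *: P + _]addrC addrK.
  have -> : 'd F z (h *: d) = h *: 'd F z d by rewrite linearZ.
  by rewrite scalerBr addrA subrK.
have hP : `|M ('d F z d - P)| <= (df p - df t) * S by exact: Hmz.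
have nMgh : `|M g1| <= `|M g0| + (cM * (e1 * (h * s)) + h * ((df p - df t) * S)).
  have -> : g1 = g0 + (g1 - g0) by rewrite subrKC.
  rewrite dg (MD g0) (MD _ (h *: _)) MZ.
  apply: (le_trans (ler_normD _ _)); rewrite lerD2l.
  apply: (le_trans (ler_normD _ _)); apply: lerD.
    apply: (le_trans (HM _)); apply: ler_wpM2l; first exact: ltW.
    have := Hd1 (h *: d); rewrite normrZ gtr0_norm //; apply; exact: hd1.
  by rewrite normrZ gtr0_norm //; apply: ler_wpM2l; [exact: ltW | exact: hP].
have hS0 : 0 <= h * S by rewrite mulr_ge0 // ltW.
have thS : (tau + h) * S <= S by rewrite -[leRHS]mul1r ler_wpM2r.
have Hfp := Hd2 (h * S) ltac:(by rewrite ger0_norm)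
   ltac:(by rewrite addr_ge0) ltac:(by rewrite /p -addrA -mulrDl; lra).
rewrite (ger0_norm hS0) in Hfp.
move: Hfp; rewrite ler_norml => /andP [Hfp _].
have Htauh : t + (tau + h) * S = p + h * S by rewrite /p mulrDl addrA.
have hA : cM * (e1 * (h * s)) <= e / 2 * h.
  have q1 : s / (s + 1) <= 1 by rewrite ler_pdivrMr ?ltr_wpDl // mul1r lerDl.
  have -> : cM * (e1 * (h * s)) = e / 2 * h * (s / (s + 1)).
    rewrite /e1; field; apply/andP; split; rewrite gt_eqF // ltr_wpDl //.
  by rewrite ler_piMr // mulr_ge0 // ?divr_ge0 // ltW.
have hB : e2 * (h * S) <= e / 2 * h.
  have q1 : S / (S + 1) <= 1 by rewrite ler_pdivrMr ?ltr_wpDl // mul1r lerDl.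
  have -> : e2 * (h * S) = e / 2 * h * (S / (S + 1)).
    by rewrite /e2; field; rewrite gt_eqF // ltr_wpDl.
  by rewrite ler_piMr // mulr_ge0 // ?divr_ge0 // ltW.
rewrite Htauh.
clear -nMgh Hfp hA hB.
lra.
Qed.


Lemma left_cond (K : realType) (X Y : normedModType K) (F : X -> Y) (M : Y -> X)
  (f df : K -> K) (R t S cM : K) (x d : X) (P : Y)
  (MD : forall a b, M (a + b) = M a + M b)
  (cM0 : 0 < cM) (HM : forall w, `|M w| <= cM * `|w|)
  (Hfder : has_deriv_on_0R f df R) (S0 : 0 <= S) (Ht0 : 0 <= t) (HtR : t + S < R)
  (Dz : forall tau, 0 <= tau -> tau <= 1 -> differentiable F (x + tau *: d)) :
  forall tau, 0 < tau -> tau <= 1 -> forall e, 0 < e -> exists2 dl, 0 < dl &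
   forall h, 0 < h -> h < dl -> h <= tau ->
    `|M (F (x + tau *: d) - F x - tau *: P)|
       - (f (t + tau * S) - f t - tau * (df t * S))
    <= `|M (F (x + (tau - h) *: d) - F x - (tau - h) *: P)|
       - (f (t + (tau - h) * S) - f t - (tau - h) * (df t * S)) + e.
Proof.
move=> tau tau0 tau1 e e0.
set s := `|d|.
have s0 : 0 <= s := normr_ge0 _.
have tS1 : tau * S <= S by rewrite -[leRHS]mul1r ler_wpM2r.
set p := t + tau * S.
have p0 : 0 <= p by rewrite /p addr_ge0 // mulr_ge0 // ltW.
have pR : p < R by rewrite /p; lra.
set z := x + tau *: d.
have Dzt := Dz tau (ltW tau0) tau1.
have [kz kz0 Hkz] := linear_lipschitz (diff_continuous Dzt).
have [d1 d1pos Hd1] := @diff_eps _ _ _ F z Dzt 1 ltr01.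
have [d2 d2pos Hd2] := @fder_eps _ f df R Hfder p p0 pR 1 ltr01.
pose B := cM * ((1 + kz) * s + `|P|) + (`|df p| + 1) * S + `|df t| * S.
have B0 : 0 <= B.
  have kz0' : 0 <= kz := ltW kz0.
  have q1 : 0 <= (1 + kz) * s + `|P| by apply: addr_ge0 => //; apply: mulr_ge0 => //; apply: addr_ge0.
  have q2 : 0 <= cM * ((1 + kz) * s + `|P|) by apply: mulr_ge0 => //; exact: ltW.
  have q3 : 0 <= (`|df p| + 1) * S by apply: mulr_ge0 => //; apply: addr_ge0.
  have q4 : 0 <= `|df t| * S by apply: mulr_ge0.
  by rewrite /B; apply: addr_ge0 => //; apply: addr_ge0.
exists (Num.min (d1 / (s + 1)) (Num.min (d2 / (S + 1)) (e / (B + 1)))).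
  by rewrite !lt_min !divr_gt0 // ?ltr_wpDl.
move=> h h0; rewrite !lt_min => /andP [hd1' /andP [hd2' hde']] htau.
have hd1 : h * s < d1.
  move: hd1'; rewrite ltr_pdivlMr ?ltr_wpDl // => hh; apply: (le_lt_trans _ hh).
  by apply: ler_wpM2l; [exact: ltW | rewrite lerDl].
have hd2 : h * S < d2.
  move: hd2'; rewrite ltr_pdivlMr ?ltr_wpDl // => hh; apply: (le_lt_trans _ hh).
  by apply: ler_wpM2l; [exact: ltW | rewrite lerDl].
have hde : h * B < e.
  move: hde'; rewrite ltr_pdivlMr ?ltr_wpDl // => hh; apply: (le_lt_trans _ hh).
  by apply: ler_wpM2l; [exact: ltW | rewrite lerDl].
have zm : x + (tau - h) *: d = z + - (h *: d) by rewrite /z scalerBl addrA.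
set g1 := F (x + (tau - h) *: d) - F x - (tau - h) *: P.
set g0 := F z - F x - tau *: P.
have dg : g0 - g1 = (F z - F (z + - (h *: d))) - h *: P.
  by rewrite /g1 /g0 zm L1 scalerBl opprB (addrAC (tau *: P)) subrr add0r.
have nk : `|- (h *: d)| = h * s by rewrite normrN normrZ gtr0_norm.
have nFd : `|F (z + - (h *: d)) - F z| <= (1 + kz) * (h * s).
  have := Hd1 (- (h *: d)); rewrite nk mul1r => /(_ hd1) hr.
  have -> : F (z + - (h *: d)) - F z =
     (F (z + - (h *: d)) - F z - 'd F z (- (h *: d))) + 'd F z (- (h *: d)).
    by rewrite subrK.
  apply: (le_trans (ler_normD _ _)).
  have := Hkz (- (h *: d)); rewrite nk => hk.
  rewrite mulrDl mul1r; exact: lerD.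
have nMg : `|M g0| <= `|M g1| + cM * ((1 + kz) * (h * s) + h * `|P|).
  have -> : g0 = g1 + (g0 - g1) by rewrite subrKC.
  rewrite (MD g1); apply: (le_trans (ler_normD _ _)); rewrite lerD2l.
  apply: (le_trans (HM _)); apply: ler_wpM2l; first exact: ltW.
  rewrite dg; apply: (le_trans (ler_normB _ _)); apply: lerD.
    by rewrite distrC.
  by rewrite normrZ gtr0_norm.
have hS0 : 0 <= h * S by rewrite mulr_ge0 // ltW.
have Htm : t + (tau - h) * S = p - h * S by rewrite /p mulrBl addrA.
have pm0 : 0 <= p - h * S.
  by rewrite -Htm; apply: addr_ge0 => //; apply: mulr_ge0 => //; rewrite subr_ge0.
have pmR : p - h * S < R.
  by apply: (le_lt_trans _ pR); rewrite lerBlDr lerDl.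
have Hfp := Hd2 (- (h * S)) ltac:(by rewrite normrN ger0_norm) pm0 pmR.
rewrite normrN (ger0_norm hS0) mul1r in Hfp.
move: Hfp; rewrite ler_norml => /andP [_ Hfp].
have f1 : - (h * S) * df p <= h * S * `|df p|.
  by rewrite mulNr -mulrN ler_wpM2l // -normrN ler_norm.
have f2 : h * (df t * S) <= h * (`|df t| * S).
  by apply: ler_wpM2l; [exact: ltW | apply: ler_wpM2r => //; exact: ler_norm].
rewrite Htm.
have hdeB : h * B = cM * ((1 + kz) * (h * s) + h * `|P|) + h * S * (`|df p| + 1) + h * (`|df t| * S).
  by rewrite /B; ring.
clear -nMg Hfp f1 f2 hde hdeB.
lra.
Qed.

Theorem lemma4p1 (K : realType) (X Y : completeNormedModType K)
  (R : K) (C : set X) (F : X -> Y) (x0 : X) (L0inv : Y -> X)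
  (f df : K -> K)
  (* F continuous on C *)
  (HFcont : {within C, continuous F})
  (* F continuously differentiable on int(C) (operator-norm continuity of F') *)
  (HFdiff : forall x, interior C x -> differentiable F x)
  (HFC1 : forall x, interior C x -> forall e : K, 0 < e ->
      exists2 d : K, 0 < d & forall z, interior C z -> `|z - x| < d ->
        forall v : X, `|'d F z v - 'd F x v| <= e * `|v|)
  (Hx0 : interior C x0)
  (* F'(x0) non-singular, with inverse L0inv *)
  (HL0l : forall v : X, L0inv ('d F x0 v) = v)
  (HL0r : forall w : Y, 'd F x0 (L0inv w) = w)
  (* f continuously differentiable on [0,R) with derivative df *)
  (Hfder : has_deriv_on_0R f df R)
  (Hdfcont : {within [set t | 0 <= t /\ t < R], continuous df})
  (Hball : ball x0 R `<=` C)
  (* majorant condition *)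
  (Hmaj : forall x y : X, ball x0 R x -> ball x0 R y ->
      `|x - x0| + `|y - x| < R ->
      forall v : X, `|L0inv ('d F y v - 'd F x v)|
        <= (df (`|y - x| + `|x - x0|) - df `|x - x0|) * `|v|)
  (HF0 : `|L0inv (F x0)| <= f 0)
  (* h1 *)
  (h1a : 0 < f 0) (h1b : df 0 = -1)
  (* h2: f' strictly increasing and convex on [0,R) *)
  (h2inc : forall s u, 0 <= s -> s < u -> u < R -> df s < df u)
  (h2cvx : forall s u l, 0 <= s -> s < R -> 0 <= u -> u < R -> 0 <= l -> l <= 1 ->
      df (l * s + (1 - l) * u) <= l * df s + (1 - l) * df u)
  (* h3 *)
  (h3 : exists t, 0 < t /\ t < R /\ f t < 0)
  (t eps theta : K) (x : X)
  (Ht0 : 0 <= t) (Heps : 0 <= eps) (Htheta : 0 <= theta) (HxC : C x)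
  (Hxt : `|x - x0| <= t) (Httbar : t < tbar df R)
  (HFx : `|L0inv (F x)| <= f t + eps)
  (HtR : t - (1 + theta) * ((f t + eps) / df t) < R)
  (y : X)
  (Hy : `|L0inv (F x + 'd F x (y - x))| <= theta * `|L0inv (F x)|) :
  [/\ `|y - x| <= - ((1 + theta) * ((f t + eps) / df t)),
      `|y - x0| <= t - (1 + theta) * ((f t + eps) / df t)
        /\ t - (1 + theta) * ((f t + eps) / df t) < R
    & `|L0inv (F y)| <= f (t - (1 + theta) * ((f t + eps) / df t)) + eps
                         + 2 * theta * (f t + eps)].
Proof.
have Dx0 := HFdiff x0 Hx0.
have Lc : continuous ('d F x0) := diff_continuous Dx0.
have [cM cM0 HM] := @bounded_inverse _ _ _ _ L0inv Lc HL0l HL0r.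
have MB : forall a b, L0inv (a - b) = L0inv a - L0inv b.
  by move=> a b; have := HL0l (L0inv a - L0inv b); rewrite linearB !HL0r.
have MD : forall a b, L0inv (a + b) = L0inv a + L0inv b.
  by move=> a b; have := HL0l (L0inv a + L0inv b); rewrite linearD !HL0r.
have MZ : forall (k : K) a, L0inv (k *: a) = k *: L0inv a.
  by move=> k a; have := HL0l (k *: L0inv a); rewrite linearZ !HL0r.
have [t3 [t30 [t3R _]]] := h3.
have R0 : 0 < R := lt_trans t30 t3R.
pose St := [set u | 0 <= u /\ u < R /\ df u < 0].
have hsup : has_sup St.
  split; first by exists 0; split; [exact: lexx | split; [exact: R0 | rewrite h1b; lra]].
  by exists R => u [_ [uR _]]; exact: ltW.
have [u [u0 [uR dfu]] tu] : exists2 u, St u & t < u.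
  have eps0 : 0 < tbar df R - t by rewrite subr_gt0.
  have [u Su hu] := sup_adherent eps0 hsup.
  by exists u => //; move: hu; rewrite /tbar -/St; lra.
have tR : t < R := lt_trans tu uR.
have dft : df t < 0 := lt_trans (h2inc t u Ht0 tu uR) dfu.
have dfmono : forall p q, 0 <= p -> p <= q -> q < R -> df p <= df q.
  move=> p q p0 pq qR; have [->|pq'] := eqVneq p q; first exact: lexx.
  by apply/ltW/h2inc => //; rewrite lt_neqAle pq' pq.
set a := `|x - x0|.
have a0 : 0 <= a := normr_ge0 _.
have dfat : df a <= df t := dfmono a t a0 Hxt tR.
have ballx : ball x0 R x.
  by rewrite -ball_normE /ball_ /= distrC; apply: (le_lt_trans Hxt tR).
have ballx0 : ball x0 R x0 := ballxx x0 R0.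
have intC : forall p, ball x0 R p -> interior C p.
  move=> p bp; apply: (filterS Hball).
  exact: (open_nbhs_nbhs (conj (ball_open x0 R) bp)).
set d := y - x.
set s := `|d|.
set S := - ((1 + theta) * ((f t + eps) / df t)).
have SdfT : S * df t = - ((1 + theta) * (f t + eps)).
  by rewrite /S; field; rewrite lt_eqF.
have HmajA : forall v, `|L0inv ('d F x v - 'd F x0 v)| <= (df a + 1) * `|v|.
  move=> v.
  have := Hmaj x0 x ballx0 ballx ltac:(rewrite subrr normr0 add0r; exact: (le_lt_trans Hxt tR)) v.
  by rewrite subrr normr0 addr0 h1b opprK.
have Hdx : `|L0inv ('d F x d)| <= (1 + theta) * (f t + eps).
  have -> : 'd F x d = (F x + 'd F x d) - F x by rewrite [RHS]addrC addKr.
  rewrite MB; apply: (le_trans (ler_normB _ _)).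
  have := normr_ge0 (L0inv (F x)).
  nra.
have Hs : s <= S.
  have e1 : d = L0inv ('d F x d) - L0inv ('d F x d - 'd F x0 d).
    by rewrite MB HL0l opprB addrC subrK.
  have h1 : s <= (1 + theta) * (f t + eps) + (df a + 1) * s.
    rewrite /s {1}e1; apply: (le_trans (ler_normB _ _)).
    exact: lerD Hdx (HmajA d).
  have h2 : s * df a <= s * df t by rewrite ler_wpM2l // /s normr_ge0.
  have ndft : 0 < - df t by rewrite oppr_gt0.
  rewrite -(ler_pM2r ndft) !mulrN SdfT opprK.
  lra.
have S0 : 0 <= S := le_trans (normr_ge0 _) Hs.
have HtR' : t + S < R := HtR.
have Hat : a <= t := Hxt.
have P2 : `|y - x0| <= t + S.
  have -> : y - x0 = d + (x - x0) by rewrite /d addrA subrK.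
  apply: (le_trans (ler_normD _ _)); rewrite addrC; exact: lerD.
split; [exact: Hs | by split | ].
have M0 : L0inv 0 = 0 by have := HL0l 0; rewrite linear0.
pose z := fun tau : K => x + tau *: d.
pose P := 'd F x d.
pose g := fun tau : K => F (z tau) - F x - tau *: P.
pose H := fun tau : K => f (t + tau * S) - f t - tau * (df t * S).
pose psi := fun tau => `|L0inv (g tau)| - H tau.
have zx : forall tau, z tau - x = tau *: d by move=> tau; rewrite /z addrC addKr.
have nz : forall tau, 0 <= tau -> `|z tau - x| = tau * s.
  by move=> tau tau0; rewrite zx normrZ ger0_norm.
have s0 : 0 <= s := normr_ge0 _.
have zball : forall tau, 0 <= tau -> tau <= 1 -> ball x0 R (z tau) /\ a + tau * s < R.
  move=> tau tau0 tau1.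
  have hts : tau * s <= S by apply: le_trans Hs; nra.
  have aR : a + tau * s < R.
    by apply: (le_lt_trans _ HtR'); lra.
  split => //.
  rewrite -ball_normE /ball_ /= distrC.
  have -> : z tau - x0 = (z tau - x) + (x - x0) by rewrite addrA subrK.
  apply: (le_lt_trans (ler_normD _ _)); rewrite nz // addrC; exact: aR.
have Dz : forall tau, 0 <= tau -> tau <= 1 -> differentiable F (z tau).
  by move=> tau tau0 tau1; apply: HFdiff; apply: intC; case: (zball tau tau0 tau1).
have Hmz : forall tau, 0 <= tau -> tau <= 1 ->
    `|L0inv ('d F (z tau) d - P)| <= (df (t + tau * S) - df t) * S.
  move=> tau tau0 tau1; have [bz aR] := zball tau tau0 tau1.
  have := Hmaj x (z tau) ballx bz ltac:(rewrite nz //) d.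
  rewrite nz // -/s -/P.
  have hts : tau * s <= tau * S by rewrite ler_wpM2l.
  have tS1 : tau * S <= S by nra.
  have sl := @slope _ df R h2cvx a t (tau * s) a0 Hat ltac:(nra) ltac:(lra).
  have m1 := dfmono (t + tau * s) (t + tau * S) ltac:(nra) ltac:(lra) ltac:(lra).
  have m2 := dfmono t (t + tau * s) Ht0 ltac:(nra) ltac:(lra).
  rewrite [tau * s + a]addrC => h.
  apply: (le_trans h); nra.
have psi1 : psi 1 <= 0.
  apply: creep.
    rewrite /psi /g /H /z !scale0r !mul0r !addr0 !subrr ?subr0 ?M0 ?normr0 ?subrr ?subr0.
    exact: lexx.
  - exact: (@right_cond K X Y F L0inv f df R t S cM x d P MD MZ cM0 HM Hfder S0 Ht0 HtR' Dz Hmz).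
  - exact: (@left_cond K X Y F L0inv f df R t S cM x d P MD cM0 HM Hfder S0 Ht0 HtR' Dz).
have zy : z 1 = y by rewrite /z scale1r /d addrC subrK.
have Fy : F y = (F x + P) + g 1.
  by rewrite /g zy scale1r addrACA subrr addr0 addrC subrK.
rewrite Fy MD; apply: (le_trans (ler_normD _ _)).
have h1 : `|L0inv (g 1)| <= H 1 by move: psi1; rewrite /psi; lra.
have h2 : theta * `|L0inv (F x)| <= theta * (f t + eps) by rewrite ler_wpM2l.
move: h1; rewrite /H mul1r mul1r (mulrC (df t) S) SdfT => h1.
lra.
Qed.
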